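(* (1) $U_{K,L,twist}$, with the bialgebra structure of the context and the antihomomorphism $\mathsf{S}$ given by $\mathsf{S}(K)=\overline{K}$, $\mathsf{S}(\overline{K})=K$, $\mathsf{S}(L)=\overline{L}$, $\mathsf{S}(\overline{L})=L$, $\mathsf{S}(E)=-E(\overline{K}+\overline{L})$, $\mathsf{S}(F)=-(K+L)F$, is a Hopf algebra with antipode $\mathsf{S}$, i.e. $\mathsf{S}\star\mathsf{id}=\mathsf{id}\star\mathsf{S}=\eta\circ\varepsilon$. (2) $U_{K,L,norm}$, with the bialgebra structure of the context and the antihomomorphism $\mathsf{T}$ given by the same formulas ($\mathsf{T}(K)=\overline{K}$, $\mathsf{T}(\overline{K})=K$, $\mathsf{T}(L)=\overline{L}$, $\mathsf{T}(\overline{L})=L$, $\mathsf{T}(E)=-E(\overline{K}+\overline{L})$, $\mathsf{T}(F)=-(K+L)F$), is a von Neumann–Hopf algebra, i.e. $\mathsf{id}\star\mathsf{T}\star\mathsf{id}=\mathsf{id}$ and $\mathsf{T}\star\mathsf{id}\star\mathsf{T}=\mathsf{T}$.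
   Context: Fix $q\in\mathbb{C}$, $q\neq 0,\pm1$. Both $U_{K,L,norm}$ and $U_{K,L,twist}$ are unital associative $\mathbb{C}$-algebras generated by $K,\overline{K},L,\overline{L},E,F$ subject to the common relations $K\overline{K}K=K$, $\overline{K}K\overline{K}=\overline{K}$, $K\overline{K}=\overline{K}K$, $L\overline{L}L=L$, $\overline{L}L\overline{L}=\overline{L}$, $L\overline{L}=\overline{L}L$, $K\overline{K}+L\overline{L}=\mathbf{1}$, $EF-FE=\frac{(K+L)-(\overline{K}+\overline{L})}{q-q^{-1}}$, together with: for $U_{K,L,norm}$: $KE=q^2EK$, $LE=q^2EL$, $\overline{K}E=q^{-2}E\overline{K}$, $\overline{L}E=q^{-2}E\overline{L}$, $KF=q^{-2}FK$, $LF=q^{-2}FL$, $\overline{K}F=q^2F\overline{K}$, $\overline{L}F=q^2F\overline{L}$; for $U_{K,L,twist}$: $KE=q^2EL$, $LE=q^2EK$, $\overline{K}E=q^{-2}E\overline{L}$, $\overline{L}E=q^{-2}E\overline{K}$, $KF=q^{-2}FL$, $LF=q^{-2}FK$, $\overline{K}F=q^2F\overline{L}$, $\overline{L}F=q^2F\overline{K}$. Bialgebra structures: in both algebras $\Delta(E)=\mathbf{1}\otimes E+E\otimes(K+L)$, $\Delta(F)=F\otimes\mathbf{1}+(\overline{K}+\overline{L})\otimes F$, $\varepsilon(K)=\varepsilon(\overline{K})=1$, $\varepsilon(L)=\varepsilon(\overline{L})=\varepsilon(E)=\varepsilon(F)=0$; in $U_{K,L,norm}$: $\Delta(K)=K\otimes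 K$, $\Delta(\overline{K})=\overline{K}\otimes\overline{K}$, $\Delta(L)=L\otimes L+L\otimes K+K\otimes L$, $\Delta(\overline{L})=\overline{L}\otimes\overline{L}+\overline{L}\otimes\overline{K}+\overline{K}\otimes\overline{L}$; in $U_{K,L,twist}$: $\Delta(K)=K\otimes K+L\otimes L$, $\Delta(\overline{K})=\overline{K}\otimes\overline{K}+\overline{L}\otimes\overline{L}$, $\Delta(L)=L\otimes K+K\otimes L$, $\Delta(\overline{L})=\overline{L}\otimes\overline{K}+\overline{K}\otimes\overline{L}$ (each extended to algebra homomorphisms). Convolution: $A\star B=\mu\circ(A\otimes B)\circ\Delta$; $\eta(\lambda)=\lambda\mathbf{1}$. *)

(* Defs.v *)
From HB Require Import structures.
From mathcomp Require Import all_boot all_order all_algebra.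
Set Implicit Arguments. Unset Strict Implicit. Unset Printing Implicit Defensive.
Import Order.TTheory GRing.Theory Num.Theory.
Local Open Scope ring_scope.

Inductive gen := GK | GKb | GL | GLb | GE | GF.

Definition gen_eqb (a b : gen) : bool :=
  match a, b with
  | GK, GK | GKb, GKb | GL, GL | GLb, GLb | GE, GE | GF, GF => true
  | _, _ => false end.

Lemma gen_eqP : Equality.axiom gen_eqb.
Proof. by case; case; constructor. Qed.

HB.instance Definition _ := hasDecEq.Build gen gen_eqP.

Section FreeAlg.
Variable R : fieldType.

(* Elements of the free algebra R<K,Kb,L,Lb,E,F> as formal linear
   combinations of words (not normalised; compared through [coeff]). *)
Definition word := seq gen.
Definition Free := seq (R * word).
(* Elements of Free (x) Free: formal linear combinations of pairs of words. *)
Definition Tens := seq (R * (word * word)).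

Definition coeff (x : Free) (w : word) : R :=
  \sum_(p <- x) (if p.2 == w then p.1 else 0).

Definition fone : Free := [:: (1, [::])].
Definition fword (w : word) : Free := [:: (1, w)].
Definition fscale (a : R) (x : Free) : Free := [seq (a * p.1, p.2) | p <- x].
Definition fsub (x y : Free) : Free := x ++ fscale (-1) y.
Definition fmul (x y : Free) : Free :=
  [seq (p.1 * p'.1, p.2 ++ p'.2) | p <- x, p' <- y].
Definition lin (h : word -> Free) (x : Free) : Free :=
  flatten [seq fscale p.1 (h p.2) | p <- x].

Definition tmul (x y : Tens) : Tens :=
  [seq (p.1 * p'.1, (p.2.1 ++ p'.2.1, p.2.2 ++ p'.2.2)) | p <- x, p' <- y].

(* The comultiplication, extended multiplicatively from generators
   (an algebra homomorphism Free -> Free (x) Free). *)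
Definition delta_word (dg : gen -> Tens) (w : word) : Tens :=
  foldr (fun g acc => tmul (dg g) acc) [:: (1, ([::], [::]))] w.

Definition pt (a : R) (u v : word) : R * (word * word) := (a, (u, v)).

Definition delta_norm_gen (g : gen) : Tens :=
  match g with
  | GK => [:: pt 1 [:: GK] [:: GK]]
  | GKb => [:: pt 1 [:: GKb] [:: GKb]]
  | GL => [:: pt 1 [:: GL] [:: GL]; pt 1 [:: GL] [:: GK]; pt 1 [:: GK] [:: GL]]
  | GLb => [:: pt 1 [:: GLb] [:: GLb]; pt 1 [:: GLb] [:: GKb];
              pt 1 [:: GKb] [:: GLb]]
  | GE => [:: pt 1 [::] [:: GE]; pt 1 [:: GE] [:: GK]; pt 1 [:: GE] [:: GL]]
  | GF => [:: pt 1 [:: GF] [::]; pt 1 [:: GKb] [:: GF]; pt 1 [:: GLb] [:: GF]]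
  end.

Definition delta_twist_gen (g : gen) : Tens :=
  match g with
  | GK => [:: pt 1 [:: GK] [:: GK]; pt 1 [:: GL] [:: GL]]
  | GKb => [:: pt 1 [:: GKb] [:: GKb]; pt 1 [:: GLb] [:: GLb]]
  | GL => [:: pt 1 [:: GL] [:: GK]; pt 1 [:: GK] [:: GL]]
  | GLb => [:: pt 1 [:: GLb] [:: GKb]; pt 1 [:: GKb] [:: GLb]]
  | GE => [:: pt 1 [::] [:: GE]; pt 1 [:: GE] [:: GK]; pt 1 [:: GE] [:: GL]]
  | GF => [:: pt 1 [:: GF] [::]; pt 1 [:: GKb] [:: GF]; pt 1 [:: GLb] [:: GF]]
  end.

Definition eps_gen (g : gen) : R :=
  match g with GK | GKb => 1 | _ => 0 end.
Definition eps_word (w : word) : R := \prod_(g <- w) eps_gen g.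
Definition eps (x : Free) : R := \sum_(p <- x) p.1 * eps_word p.2.
Definition etaeps (x : Free) : Free := [:: (eps x, [::])].

Definition S_gen (g : gen) : Free :=
  match g with
  | GK => fword [:: GKb]
  | GKb => fword [:: GK]
  | GL => fword [:: GLb]
  | GLb => fword [:: GL]
  | GE => [:: (-1, [:: GE; GKb]); (-1, [:: GE; GLb])]
  | GF => [:: (-1, [:: GK; GF]); (-1, [:: GL; GF])]
  end.
(* antihomomorphic extension: S(g1 ... gn) = S(gn) ... S(g1) *)
Definition S_word (w : word) : Free :=
  foldr (fun g acc => fmul acc (S_gen g)) fone w.
Definition Smap (x : Free) : Free := lin S_word x.

(* convolution  f * g = mu o (f (x) g) o Delta, for f g given on words
   and extended linearly *)
Definition conv (dg : gen -> Tens) (f g : word -> Free) (x : Free) : Free :=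
  lin (fun w => flatten [seq fscale p.1 (fmul (f p.2.1) (g p.2.2))
                        | p <- delta_word dg w]) x.

(* triple convolution (f * g) * h = mu o (mu o (f (x) g) (x) h) o (Delta (x) id) o Delta *)
Definition conv3 (dg : gen -> Tens) (f g h : word -> Free) (x : Free) : Free :=
  lin (fun w => flatten [seq flatten
          [seq fscale (p.1 * p'.1) (fmul (fmul (f p'.2.1) (g p'.2.2)) (h p.2.2))
          | p' <- delta_word dg p.2.1]
        | p <- delta_word dg w]) x.

Definition idw (w : word) : Free := fword w.

Definition in_ideal (rels : seq Free) (x : Free) : Prop :=
  exists s : seq (R * word * Free * word),
    all (fun t => t.1.2 \in rels) s /\
    forall w, coeff x w =
      coeff (flatten [seq fscale t.1.1.1
                       (fmul (fmul (fword t.1.1.2) t.1.2) (fword t.2)) | t <- s]) w.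

(* Relators (r means r = 0). *)
Definition rels_common (q : R) : seq Free :=
  let c := (q - q^-1)^-1 in
  [:: [:: (1, [:: GK; GKb; GK]); (-1, [:: GK])];
      [:: (1, [:: GKb; GK; GKb]); (-1, [:: GKb])];
      [:: (1, [:: GK; GKb]); (-1, [:: GKb; GK])];
      [:: (1, [:: GL; GLb; GL]); (-1, [:: GL])];
      [:: (1, [:: GLb; GL; GLb]); (-1, [:: GLb])];
      [:: (1, [:: GL; GLb]); (-1, [:: GLb; GL])];
      [:: (1, [:: GK; GKb]); (1, [:: GL; GLb]); (-1, [::])];
      [:: (1, [:: GE; GF]); (-1, [:: GF; GE]); (- c, [:: GK]); (- c, [:: GL]);
          (c, [:: GKb]); (c, [:: GLb])]].

Definition rel2 (a : gen) (b : gen) (s : R) (c d : gen) : Free :=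
  [:: (1, [:: a; b]); (- s, [:: c; d])].

Definition rels_norm (q : R) : seq Free :=
  rels_common q ++
  [:: rel2 GK GE (q ^+ 2) GE GK; rel2 GL GE (q ^+ 2) GE GL;
      rel2 GKb GE (q ^- 2) GE GKb; rel2 GLb GE (q ^- 2) GE GLb;
      rel2 GK GF (q ^- 2) GF GK; rel2 GL GF (q ^- 2) GF GL;
      rel2 GKb GF (q ^+ 2) GF GKb; rel2 GLb GF (q ^+ 2) GF GLb].

Definition rels_twist (q : R) : seq Free :=
  rels_common q ++
  [:: rel2 GK GE (q ^+ 2) GE GL; rel2 GL GE (q ^+ 2) GE GK;
      rel2 GKb GE (q ^- 2) GE GLb; rel2 GLb GE (q ^- 2) GE GKb;
      rel2 GK GF (q ^- 2) GF GL; rel2 GL GF (q ^- 2) GF GK;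
      rel2 GKb GF (q ^+ 2) GF GLb; rel2 GLb GF (q ^+ 2) GF GKb].

End FreeAlg.

(* Main.v *)
Require Import Defs.
From HB Require Import structures.
From mathcomp Require Import all_boot all_order all_algebra.
From Stdlib Require Import ClassicalEpsilon FunctionalExtensionality PropExtensionality ProofIrrelevance.
Set Implicit Arguments. Unset Strict Implicit. Unset Printing Implicit Defensive.
Import GRing.Theory.
Local Open Scope ring_scope.

Section FreeLemmas.
Variable R : fieldType.
Implicit Types (x y z : Free R) (u v w : word).

Definition eqc x y := forall w, coeff x w = coeff y w.

Lemma coeff_nil w : coeff ([::] : Free R) w = 0.
Proof. by rewrite /coeff big_nil. Qed.
Lemma coeff_cons p x w : coeff (p :: x) w = (if p.2 == w then p.1 else 0) + coeff x w.
Proof. by rewrite /coeff big_cons. Qed.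
Lemma coeff_cat x y w : coeff (x ++ y) w = coeff x w + coeff y w.
Proof. by rewrite /coeff big_cat. Qed.
Lemma coeff_scale a x w : coeff (fscale a x) w = a * coeff x w.
Proof.
rewrite /coeff /fscale big_map mulr_sumr; apply: eq_bigr => p _ /=.
by case: eqP; rewrite ?mulr0.
Qed.
Lemma coeff_flatten (l : seq (Free R)) w : coeff (flatten l) w = \sum_(z <- l) coeff z w.
Proof. by elim: l => [|z l IH] /=; rewrite ?big_nil ?coeff_nil // coeff_cat IH big_cons. Qed.
Lemma coeff_fmul x y w : coeff (fmul x y) w =
  \sum_(p <- x) \sum_(p' <- y) (if p.2 ++ p'.2 == w then p.1 * p'.1 else 0).
Proof. by rewrite /coeff /fmul big_allpairs_dep. Qed.
Lemma coeff_fword u w : coeff (fword R u) w = if u == w then 1 else 0.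
Proof. by rewrite /coeff big_cons big_nil addr0. Qed.

Lemma sum_support (V : nmodType) (phi : R -> word -> V)
  (phi0 : forall u, phi 0 u = 0) (phiD : forall a b u, phi (a + b) u = phi a u + phi b u)
  (s : seq word) x :
  uniq s -> {subset [seq p.2 | p <- x] <= s} ->
  \sum_(p <- x) phi p.1 p.2 = \sum_(u <- s) phi (coeff x u) u.
Proof.
move=> us; elim: x => [|p x IH] sub.
  by rewrite big_nil big1 // => u _; rewrite coeff_nil phi0.
rewrite big_cons IH; last by move=> u hu; apply: sub; rewrite inE hu orbT.
have ps : p.2 \in s by apply: sub; rewrite inE eqxx.
have -> : \sum_(u <- s) phi (coeff (p :: x) u) u =
   \sum_(u <- s) (phi (if p.2 == u then p.1 else 0) u + phi (coeff x u) u).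
  by apply: eq_bigr => u _; rewrite coeff_cons phiD.
rewrite big_split /=; congr (_ + _).
rewrite (bigD1_seq p.2) //= eqxx big1 ?addr0 // => u hu.
by rewrite eq_sym (negbTE hu) phi0.
Qed.

Lemma lin_inv (V : nmodType) (phi : R -> word -> V)
  (phi0 : forall u, phi 0 u = 0) (phiD : forall a b u, phi (a + b) u = phi a u + phi b u) x y :
  eqc x y -> \sum_(p <- x) phi p.1 p.2 = \sum_(p <- y) phi p.1 p.2.
Proof.
move=> e; set s := undup [seq p.2 | p <- x ++ y].
have us : uniq s by apply: undup_uniq.
rewrite (sum_support phi0 phiD us) ?(sum_support phi0 phiD us).
- by apply: eq_bigr => u _; rewrite e.
- by move=> u hu; rewrite mem_undup map_cat mem_cat hu orbT.
- by move=> u hu; rewrite mem_undup map_cat mem_cat hu.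
Qed.

Lemma coeff_as_sum x w : coeff x w = \sum_(p <- x) (if p.2 == w then p.1 else 0).
Proof. by []. Qed.

Lemma eqc_refl x : eqc x x. Proof. by []. Qed.
Lemma eqc_sym x y : eqc x y -> eqc y x. Proof. by move=> h w; rewrite h. Qed.
Lemma eqc_trans x y z : eqc x y -> eqc y z -> eqc x z. Proof. by move=> h1 h2 w; rewrite h1 h2. Qed.

Lemma eqc_cat x x' y y' : eqc x x' -> eqc y y' -> eqc (x ++ y) (x' ++ y').
Proof. by move=> h1 h2 w; rewrite !coeff_cat h1 h2. Qed.
Lemma eqc_scale a x x' : eqc x x' -> eqc (fscale a x) (fscale a x').
Proof. by move=> h w; rewrite !coeff_scale h. Qed.
Lemma eqc_catC x y : eqc (x ++ y) (y ++ x).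
Proof. by move=> w; rewrite !coeff_cat addrC. Qed.

Lemma eqc_fmull x x' y : eqc x x' -> eqc (fmul x y) (fmul x' y).
Proof.
move=> h w; rewrite !coeff_fmul.
apply: (lin_inv (phi := fun a u => \sum_(p' <- y) (if u ++ p'.2 == w then a * p'.1 else 0))) h.
- by move=> u; apply: big1 => p' _; case: ifP; rewrite ?mul0r.
- move=> a b u; rewrite -big_split; apply: eq_bigr => p' _ /=.
  by case: ifP; rewrite ?mulrDl ?addr0.
Qed.

Lemma eqc_fmulr x y y' : eqc y y' -> eqc (fmul x y) (fmul x y').
Proof.
move=> h w; rewrite !coeff_fmul exchange_big [RHS]exchange_big.
apply: (lin_inv (phi := fun b v => \sum_(p <- x) (if p.2 ++ v == w then p.1 * b else 0))) h.
- by move=> u; apply: big1 => p _; case: ifP; rewrite ?mulr0.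
- move=> a b u; rewrite -big_split; apply: eq_bigr => p _ /=.
  by case: ifP; rewrite ?mulrDr ?addr0.
Qed.

Lemma eqc_fmul x x' y y' : eqc x x' -> eqc y y' -> eqc (fmul x y) (fmul x' y').
Proof. by move=> h1 h2; apply: eqc_trans (eqc_fmull _ h1) (eqc_fmulr _ h2). Qed.

Lemma fmul_catl x x' y : fmul (x ++ x') y = fmul x y ++ fmul x' y.
Proof. by rewrite /fmul allpairs_cat. Qed.

Lemma eqc_fmul_catr x y y' : eqc (fmul x (y ++ y')) (fmul x y ++ fmul x y').
Proof.
move=> w; rewrite coeff_cat !coeff_fmul -big_split; apply: eq_bigr => p _.
by rewrite big_cat.
Qed.

Lemma eqc_fmul_scalel a x y : eqc (fmul (fscale a x) y) (fscale a (fmul x y)).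
Proof.
move=> w; rewrite coeff_scale !coeff_fmul /fscale big_map mulr_sumr.
apply: eq_bigr => p _; rewrite mulr_sumr; apply: eq_bigr => p' _ /=.
by case: ifP; rewrite ?mulr0 // mulrA.
Qed.

Lemma eqc_fmul_scaler a x y : eqc (fmul x (fscale a y)) (fscale a (fmul x y)).
Proof.
move=> w; rewrite coeff_scale !coeff_fmul /fscale mulr_sumr.
apply: eq_bigr => p _; rewrite big_map mulr_sumr; apply: eq_bigr => p' _ /=.
by case: ifP; rewrite ?mulr0 // mulrCA.
Qed.

Lemma eqc_fmulA x y z : eqc (fmul (fmul x y) z) (fmul x (fmul y z)).
Proof.
move=> w; rewrite !coeff_fmul /fmul big_allpairs_dep; apply: eq_bigr => p _.
rewrite big_allpairs_dep; apply: eq_bigr => p' _; apply: eq_bigr => p'' _ /=.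
by rewrite catA mulrA.
Qed.

Lemma eqc_fmul1l x : eqc (fmul (fone R) x) x.
Proof.
move=> w; rewrite coeff_fmul big_cons big_nil addr0 /=; apply: eq_bigr => p _.
by rewrite mul1r.
Qed.
Lemma eqc_fmul1r x : eqc (fmul x (fone R)) x.
Proof.
move=> w; rewrite coeff_fmul; apply: eq_bigr => p _.
by rewrite big_cons big_nil addr0 /= cats0 mulr1.
Qed.

Lemma eqc_fword_cat u v : eqc (fmul (fword R u) (fword R v)) (fword R (u ++ v)).
Proof. by move=> w; rewrite coeff_fmul coeff_fword !big_cons !big_nil !addr0 /= mulr1. Qed.

Lemma eqc_fmul_flattenr x (l : seq (Free R)) :
  eqc (fmul x (flatten l)) (flatten [seq fmul x z | z <- l]).
Proof.
elim: l => [|z l IH] /=.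
  by move=> w; rewrite coeff_fmul coeff_nil big1 // => p _; rewrite big_nil.
apply: eqc_trans (eqc_fmul_catr _ _ _) _; exact: eqc_cat.
Qed.

Lemma fmul_flattenl (l : seq (Free R)) y :
  fmul (flatten l) y = flatten [seq fmul z y | z <- l].
Proof. by elim: l => [|z l IH] //=; rewrite fmul_catl IH. Qed.

Lemma eqc_flatten (T : Type) (f g : T -> Free R) (l : seq T) :
  (forall t, eqc (f t) (g t)) -> eqc (flatten (map f l)) (flatten (map g l)).
Proof. move=> h w; rewrite !coeff_flatten !big_map; apply: eq_bigr => t _; exact: h. Qed.

Lemma fmul_nilr x : eqc (fmul x [::]) [::].
Proof. by move=> w; rewrite coeff_fmul coeff_nil big1 // => p _; rewrite big_nil. Qed.

Lemma eqc_scaleA a b x : eqc (fscale a (fscale b x)) (fscale (a * b) x).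
Proof. by move=> w; rewrite !coeff_scale mulrA. Qed.

Lemma eqc_fsubxx x : eqc (fsub x x) [::].
Proof. by move=> w; rewrite coeff_cat coeff_scale coeff_nil mulN1r subrr. Qed.

End FreeLemmas.


Section Ideal.
Variable R : fieldType.
Variable rels : seq (Free R).
Implicit Types (x y z : Free R) (u v w : word).

Definition igen (s : seq (R * word * Free R * word)) : Free R :=
  flatten [seq fscale t.1.1.1 (fmul (fmul (fword R t.1.1.2) t.1.2) (fword R t.2)) | t <- s].

Lemma inI_intro x s : all (fun t => t.1.2 \in rels) s -> eqc x (igen s) -> in_ideal rels x.
Proof. by move=> h1 h2; exists s; split. Qed.

Lemma I_eqc x y : eqc x y -> in_ideal rels y -> in_ideal rels x.
Proof. by move=> e [s [h1 h2]]; exists s; split => // w; rewrite e h2. Qed.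

Lemma I_nil : in_ideal rels [::].
Proof. by exists [::]. Qed.

Lemma I_cat x y : in_ideal rels x -> in_ideal rels y -> in_ideal rels (x ++ y).
Proof.
move=> [s1 [a1 e1]] [s2 [a2 e2]]; exists (s1 ++ s2); split; first by rewrite all_cat a1.
by move=> w; rewrite coeff_cat e1 e2 map_cat flatten_cat coeff_cat.
Qed.

Lemma I_scale a x : in_ideal rels x -> in_ideal rels (fscale a x).
Proof.
move=> [s [a1 e1]]; exists [seq ((a * t.1.1.1, t.1.1.2, t.1.2), t.2) | t <- s]; split.
  by rewrite all_map.
move=> w; rewrite coeff_scale e1 -map_comp !coeff_flatten !big_map mulr_sumr.
by apply: eq_bigr => t _ /=; rewrite !coeff_scale mulrA.
Qed.

Lemma I_rel r : r \in rels -> in_ideal rels r.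
Proof.
move=> hr; exists [:: ((1, [::], r), [::])]; split; first by rewrite /= hr.
move=> w; rewrite /= cats0 coeff_scale mul1r; move: w.
apply: eqc_trans (eqc_sym (eqc_fmul1r _)) _.
apply: eqc_fmull; exact: eqc_sym (eqc_fmul1l _).
Qed.

Lemma I_lmulw u x : in_ideal rels x -> in_ideal rels (fmul (fword R u) x).
Proof.
move=> [s [a1 e1]]; apply: (@inI_intro _ [seq ((t.1.1.1, u ++ t.1.1.2, t.1.2), t.2) | t <- s]).
  by rewrite all_map.
apply: eqc_trans (eqc_fmulr _ e1) _.
apply: eqc_trans (eqc_fmul_flattenr _ _) _.
rewrite /igen -!map_comp; apply: eqc_flatten => t /=.
apply: eqc_trans (eqc_fmul_scaler _ _ _) _; apply: eqc_scale.
apply: eqc_trans (eqc_sym (eqc_fmulA _ _ _)) _; apply: eqc_fmull.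
apply: eqc_trans (eqc_sym (eqc_fmulA _ _ _)) _; apply: eqc_fmull.
exact: eqc_fword_cat.
Qed.

Lemma I_rmulw u x : in_ideal rels x -> in_ideal rels (fmul x (fword R u)).
Proof.
move=> [s [a1 e1]]; apply: (@inI_intro _ [seq ((t.1.1.1, t.1.1.2, t.1.2), t.2 ++ u) | t <- s]).
  by rewrite all_map.
apply: eqc_trans (eqc_fmull _ e1) _.
rewrite /igen fmul_flattenl -!map_comp; apply: eqc_flatten => t /=.
apply: eqc_trans (eqc_fmul_scalel _ _ _) _; apply: eqc_scale.
apply: eqc_trans (eqc_fmulA _ _ _) _; apply: eqc_fmulr.
exact: eqc_fword_cat.
Qed.

Lemma eqc_single (p : R * word) : eqc [:: p] (fscale p.1 (fword R p.2)).
Proof. by move=> w; rewrite coeff_scale coeff_fword /coeff !big_cons !big_nil !addr0; case: ifP; rewrite ?mulr1 ?mulr0. Qed.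

Lemma I_lmul z x : in_ideal rels x -> in_ideal rels (fmul z x).
Proof.
move=> hx; elim: z => [|p z IH]; first exact: I_nil.
rewrite -cat1s fmul_catl; apply: I_cat => //.
apply: I_eqc (I_scale p.1 (I_lmulw p.2 hx)).
apply: eqc_trans (eqc_fmul_scalel _ _ _); apply: eqc_fmull; exact: eqc_single.
Qed.

Lemma I_rmul z x : in_ideal rels x -> in_ideal rels (fmul x z).
Proof.
move=> hx; elim: z => [|p z IH]; first by apply: I_eqc I_nil; exact: fmul_nilr.
apply: I_eqc (eqc_trans _ (eqc_fmul_catr x [:: p] z)) _; first by [].
apply: I_cat => //.
apply: I_eqc (I_scale p.1 (I_rmulw p.2 hx)).
apply: eqc_trans (eqc_fmul_scaler _ _ _); apply: eqc_fmulr; exact: eqc_single.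
Qed.

Definition eqv x y := in_ideal rels (fsub x y).

Lemma eqc_eqv x y : eqc x y -> eqv x y.
Proof.
move=> e; apply: I_eqc I_nil => w.
by rewrite coeff_cat coeff_scale coeff_nil e mulN1r subrr.
Qed.

Lemma eqv_refl x : eqv x x. Proof. exact: eqc_eqv. Qed.

Lemma eqv_sym x y : eqv x y -> eqv y x.
Proof.
move=> h; apply: I_eqc (I_scale (-1) h) => w.
by rewrite /fsub !coeff_scale !coeff_cat !coeff_scale !mulN1r opprD opprK addrC.
Qed.

Lemma eqv_trans x y z : eqv x y -> eqv y z -> eqv x z.
Proof.
move=> h1 h2; apply: I_eqc (I_cat h1 h2) => w.
by rewrite /fsub !coeff_cat !coeff_scale !mulN1r addrA subrK.
Qed.

Lemma eqv_cat x x' y y' : eqv x x' -> eqv y y' -> eqv (x ++ y) (x' ++ y').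
Proof.
move=> h1 h2; apply: I_eqc (I_cat h1 h2) => w.
by rewrite /fsub !coeff_cat !coeff_scale !mulN1r !coeff_cat opprD addrACA.
Qed.

Lemma eqv_scale a x x' : eqv x x' -> eqv (fscale a x) (fscale a x').
Proof.
move=> h; apply: I_eqc (I_scale a h) => w.
by rewrite /fsub !(coeff_cat, coeff_scale) !mulN1r mulrDr mulrN.
Qed.

Lemma eqv_fmul x x' y y' : eqv x x' -> eqv y y' -> eqv (fmul x y) (fmul x' y').
Proof.
move=> h1 h2; apply: I_eqc (I_cat (I_rmul y h1) (I_lmul x' h2)) => w.
rewrite !coeff_cat coeff_scale /fsub fmul_catl coeff_cat.
rewrite (eqc_fmul_catr x' y) coeff_cat.
rewrite (eqc_fmul_scalel (-1) x' y) (eqc_fmul_scaler (-1) x' y') !coeff_scale.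
by rewrite !mulN1r addrA subrK.
Qed.

End Ideal.


Section Quot.
Variable R : fieldType.
Variable rels : seq (Free R).
Implicit Types (x y z : Free R) (u v w : word).

Definition Q := {P : Free R -> Prop | exists x, P = eqv rels x}.
Definition cls x : Q := exist _ (eqv rels x) (ex_intro _ x erefl).

Lemma cls_eqv x y : cls x = cls y <-> eqv rels x y.
Proof.
split.
  move=> e; have : eqv rels x = eqv rels y by move: (f_equal (@proj1_sig _ _) e).
  move=> e2; apply: eqv_sym; rewrite -e2; exact: eqv_refl.
move=> h; apply: eq_sig_hprop; first by move=> P p1 p2; apply: proof_irrelevance.
apply: functional_extensionality => z; apply: propositional_extensionality; split.
  by move=> h2; apply: eqv_trans (eqv_sym h) h2.
by move=> h2; apply: eqv_trans h h2.
Qed.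

Lemma cls_eqc x y : eqc x y -> cls x = cls y.
Proof. by move=> e; apply/cls_eqv/eqc_eqv. Qed.

Definition rep (P : Q) : Free R := proj1_sig (constructive_indefinite_description _ (proj2_sig P)).

Lemma repK P : cls (rep P) = P.
Proof.
rewrite /rep; case: constructive_indefinite_description => x /= e.
apply: eq_sig_hprop; first by move=> P' p1 p2; apply: proof_irrelevance.
by rewrite /= e.
Qed.

Lemma Qind (Pr : Q -> Prop) : (forall x, Pr (cls x)) -> forall P, Pr P.
Proof. by move=> h P; rewrite -(repK P). Qed.

Lemma rep_cls x : eqv rels (rep (cls x)) x.
Proof. by apply/cls_eqv; rewrite repK. Qed.

Definition Qeqb (P P' : Q) : bool := if excluded_middle_informative (P = P') then true else false.
Lemma QeqP : Equality.axiom Qeqb.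
Proof. by move=> P P'; rewrite /Qeqb; case: excluded_middle_informative => h; constructor. Qed.
HB.instance Definition _ := hasDecEq.Build Q QeqP.

Definition Qfind (P : pred Q) (n : nat) : option Q :=
  match excluded_middle_informative (exists q : Q, P q) with
  | left h => Some (proj1_sig (constructive_indefinite_description _ h))
  | right _ => None end.
Lemma Qfind_correct P n (q : Q) : Qfind P n = Some q -> P q.
Proof.
rewrite /Qfind; case: excluded_middle_informative => // h [<-].
by case: constructive_indefinite_description.
Qed.
Lemma Qfind_complete (P : pred Q) : (exists q : Q, P q) -> exists n, Qfind P n.
Proof. by move=> h; exists 0%N; rewrite /Qfind; case: excluded_middle_informative. Qed.
Lemma Qfind_ext (P P' : pred Q) : P =1 P' -> Qfind P =1 Qfind P'.
Proof. by move=> h; have -> : P = P' by apply: functional_extensionality. Qed.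
HB.instance Definition _ := hasChoice.Build Q Qfind_correct Qfind_complete Qfind_ext.

Definition Qzero : Q := cls [::].
Definition Qone : Q := cls (fone R).
Definition Qadd (P P' : Q) : Q := cls (rep P ++ rep P').
Definition Qopp (P : Q) : Q := cls (fscale (-1) (rep P)).
Definition Qmul (P P' : Q) : Q := cls (fmul (rep P) (rep P')).

Lemma Qadd_cls x y : Qadd (cls x) (cls y) = cls (x ++ y).
Proof. by apply/cls_eqv; apply: eqv_cat; apply: rep_cls. Qed.
Lemma Qopp_cls x : Qopp (cls x) = cls (fscale (-1) x).
Proof. by apply/cls_eqv; apply: eqv_scale; apply: rep_cls. Qed.
Lemma Qmul_cls x y : Qmul (cls x) (cls y) = cls (fmul x y).
Proof. by apply/cls_eqv; apply: eqv_fmul; apply: rep_cls. Qed.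

Lemma QaddA : associative Qadd.
Proof. by elim/Qind => x; elim/Qind => y; elim/Qind => z; rewrite !Qadd_cls catA. Qed.
Lemma QaddC : commutative Qadd.
Proof. by elim/Qind => x; elim/Qind => y; rewrite !Qadd_cls; apply: cls_eqc; apply: eqc_catC. Qed.
Lemma Qadd0 : left_id Qzero Qadd.
Proof. by elim/Qind => x; rewrite /Qzero Qadd_cls. Qed.
Lemma QaddN : left_inverse Qzero Qopp Qadd.
Proof.
elim/Qind => x; rewrite Qopp_cls Qadd_cls; apply: cls_eqc => w.
by rewrite coeff_cat coeff_scale coeff_nil mulN1r addNr.
Qed.
Lemma QmulA : associative Qmul.
Proof. by elim/Qind => x; elim/Qind => y; elim/Qind => z; rewrite !Qmul_cls; apply: cls_eqc; apply: eqc_sym; apply: eqc_fmulA. Qed.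
Lemma Qmul1 : left_id Qone Qmul.
Proof. by elim/Qind => x; rewrite Qmul_cls; apply: cls_eqc; apply: eqc_fmul1l. Qed.
Lemma Qmulr1 : right_id Qone Qmul.
Proof. by elim/Qind => x; rewrite Qmul_cls; apply: cls_eqc; apply: eqc_fmul1r. Qed.
Lemma QmulDl : left_distributive Qmul Qadd.
Proof. by elim/Qind => x; elim/Qind => y; elim/Qind => z; rewrite !(Qmul_cls, Qadd_cls) fmul_catl. Qed.
Lemma QmulDr : right_distributive Qmul Qadd.
Proof. by elim/Qind => x; elim/Qind => y; elim/Qind => z; rewrite !(Qmul_cls, Qadd_cls); apply: cls_eqc; apply: eqc_fmul_catr. Qed.

HB.instance Definition _ := GRing.isPzRing.Build Q QaddA QaddC Qadd0 QaddN QmulA Qmul1 Qmulr1 QmulDl QmulDr.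

Lemma cls_cat x y : cls (x ++ y) = cls x + cls y.
Proof. by rewrite -Qadd_cls. Qed.
Lemma cls_fmul x y : cls (fmul x y) = cls x * cls y.
Proof. by rewrite -Qmul_cls. Qed.
Lemma cls_nil : cls [::] = 0.
Proof. by []. Qed.
Lemma cls_fone : cls (fone R) = 1.
Proof. by []. Qed.

Lemma cls0_ideal x : cls x = 0 -> in_ideal rels x.
Proof. by move/cls_eqv; rewrite /eqv /fsub /= cats0. Qed.

Lemma cls_rel r : r \in rels -> cls r = 0.
Proof. by move=> h; apply/cls_eqv; rewrite /eqv /fsub /= cats0; apply: I_rel. Qed.

End Quot.


Section Maps.
Variable R : fieldType.
Variable rels : seq (Free R).
Local Notation Q := (Q rels).
Local Notation cls := (@cls R rels).
Implicit Types (x y z : Free R) (u v w : word).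

Definition sc (a : R) : Q := cls [:: (a, [::])].
Definition wd u : Q := cls (fword R u).

Lemma cls_scale a x : cls (fscale a x) = sc a * cls x.
Proof.
rewrite /sc -cls_fmul; apply: cls_eqc => w.
rewrite coeff_scale coeff_fmul big_cons big_nil addr0 /coeff mulr_sumr.
by apply: eq_bigr => p _ /=; case: ifP; rewrite ?mulr0.
Qed.

Lemma sc_comm a (t : Q) : sc a * t = t * sc a.
Proof.
elim/Qind: t => x; rewrite /sc -!cls_fmul; apply: cls_eqc => w.
rewrite !coeff_fmul big_cons big_nil addr0; apply: eq_bigr => p _.
by rewrite big_cons big_nil addr0 cats0 /=; case: ifP; rewrite // mulrC.
Qed.

Lemma sc_add a b : sc (a + b) = sc a + sc b.
Proof. by rewrite /sc -cls_cat; apply: cls_eqc => w; rewrite coeff_cat /coeff !big_cons !big_nil !addr0; case: ifP; rewrite ?addr0. Qed.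
Lemma sc_mul a b : sc (a * b) = sc a * sc b.
Proof. by rewrite /sc -cls_fmul; apply: cls_eqc => w; rewrite coeff_fmul /coeff !big_cons !big_nil !addr0. Qed.
Lemma sc1 : sc 1 = 1. Proof. by []. Qed.
Lemma sc0 : sc 0 = 0.
Proof. by rewrite /sc -cls_nil; apply: cls_eqc => w; rewrite /coeff !big_cons !big_nil; case: ifP; rewrite addr0. Qed.
Lemma scN a : sc (- a) = - sc a.
Proof. by apply/eqP; rewrite -subr_eq0 opprK -sc_add addNr sc0. Qed.

Lemma wd_cat u v : wd (u ++ v) = wd u * wd v.
Proof. by rewrite /wd -cls_fmul; apply: cls_eqc; apply: eqc_sym; apply: eqc_fword_cat. Qed.
Lemma wd_nil : wd [::] = 1. Proof. by []. Qed.
Lemma wd_cons g u : wd (g :: u) = wd [:: g] * wd u.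
Proof. by rewrite -wd_cat. Qed.

Lemma cls_sum x : cls x = \sum_(p <- x) sc p.1 * wd p.2.
Proof.
elim: x => [|p x IH]; first by rewrite big_nil.
rewrite big_cons -IH -cat1s cls_cat; congr (_ + _).
by rewrite (cls_eqc rels (eqc_single p)) cls_scale.
Qed.

Lemma cls_flatten (l : seq (Free R)) : cls (flatten l) = \sum_(z <- l) cls z.
Proof. by elim: l => [|z l IH]; rewrite ?big_nil // big_cons /= cls_cat IH. Qed.

Lemma cls_lin (h : word -> Free R) x : cls (lin h x) = \sum_(p <- x) sc p.1 * cls (h p.2).
Proof. by rewrite /lin cls_flatten big_map; apply: eq_bigr => p _; rewrite cls_scale. Qed.

Lemma lin_eqc (F : word -> Q) x y : eqc x y ->
  \sum_(p <- x) sc p.1 * F p.2 = \sum_(p <- y) sc p.1 * F p.2.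
Proof.
apply: (lin_inv (phi := fun a u => sc a * F u)).
- by move=> u; rewrite sc0 mul0r.
- by move=> a b u; rewrite sc_add mulrDl.
Qed.

Definition Sg g : Q := cls (@S_gen R g).
Definition Sw u : Q := cls (S_word R u).
Lemma Sw_nil : Sw [::] = 1. Proof. by []. Qed.
Lemma Sw_cons g u : Sw (g :: u) = Sw u * Sg g.
Proof. by rewrite /Sw /= cls_fmul. Qed.
Lemma Sw_cat u v : Sw (u ++ v) = Sw v * Sw u.
Proof. by elim: u => [|g u IH] /=; rewrite ?Sw_nil ?mulr1 // !Sw_cons IH mulrA. Qed.
Lemma Sw1 g : Sw [:: g] = Sg g.
Proof. by rewrite Sw_cons Sw_nil mul1r. Qed.

Definition SX x : Q := \sum_(p <- x) sc p.1 * Sw p.2.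
Lemma SX_cat x y : SX (x ++ y) = SX x + SX y. Proof. by rewrite /SX big_cat. Qed.
Lemma SX_flatten (l : seq (Free R)) : SX (flatten l) = \sum_(z <- l) SX z.
Proof. by elim: l => [|z l IH]; rewrite /SX ?big_nil // big_cons /= big_cat -IH. Qed.
Lemma SX_scale a x : SX (fscale a x) = sc a * SX x.
Proof. by rewrite /SX big_map mulr_sumr; apply: eq_bigr => p _; rewrite sc_mul mulrA. Qed.
Lemma SX_fmul x y : SX (fmul x y) = SX y * SX x.
Proof.
rewrite /SX /fmul big_allpairs_dep mulr_suml exchange_big; apply: eq_bigr => p' _.
rewrite mulr_sumr; apply: eq_bigr => p _ /=.
rewrite sc_mul Sw_cat (sc_comm p.1 (sc p'.1)) -!mulrA; congr (_ * _).
by rewrite mulrA (sc_comm p.1 (Sw p'.2)) -mulrA.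
Qed.
Lemma SX_fword u : SX (fword R u) = Sw u.
Proof. by rewrite /SX big_cons big_nil addr0 mul1r. Qed.

Lemma Smap_ideal x : (forall r, r \in rels -> SX r = 0) ->
  in_ideal rels x -> in_ideal rels (Smap x).
Proof.
move=> hr [s [hs e]]; apply: cls0_ideal.
rewrite /Smap cls_lin; change (SX x = 0); rewrite /SX (lin_eqc Sw e) -/(SX (igen s)) /igen SX_flatten big_map.
apply: big1_seq => t /andP[_ ht]; move/allP: hs => /(_ t ht) hrt.
by rewrite SX_scale !SX_fmul !SX_fword hr // mul0r mulr0 mulr0.
Qed.

End Maps.


Section Conv.
Variable R : fieldType.
Variable rels : seq (Free R).
Variable dg : gen -> Tens R.
Local Notation Q := (Q rels).
Local Notation cls := (@cls R rels).
Local Notation sc := (@sc R rels).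
Local Notation wd := (@wd R rels).
Local Notation Sw := (@Sw R rels).
Local Notation Dw := (delta_word dg).
Implicit Types (u v w : word).

Definition TB (B : word -> word -> Q) (t : Tens R) : Q := \sum_(p <- t) sc p.1 * B p.2.1 p.2.2.

Lemma TB_tmul B t1 t2 :
  TB B (tmul t1 t2) = \sum_(a <- t1) sc a.1 * TB (fun x y => B (a.2.1 ++ x) (a.2.2 ++ y)) t2.
Proof.
rewrite /TB /tmul big_allpairs_dep; apply: eq_bigr => a _; rewrite mulr_sumr.
by apply: eq_bigr => b _ /=; rewrite sc_mul mulrA.
Qed.

Lemma Dw_nil : Dw [::] = [:: (1, ([::], [::]))]. Proof. by []. Qed.
Lemma Dw_cons g u : Dw (g :: u) = tmul (dg g) (Dw u). Proof. by []. Qed.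

Lemma TB_nil B : TB B (Dw [::]) = B [::] [::].
Proof. by rewrite /TB big_cons big_nil addr0 mul1r. Qed.

Lemma TB_Dw_cat B u v :
  TB B (Dw (u ++ v)) = \sum_(a <- Dw u) sc a.1 * TB (fun x y => B (a.2.1 ++ x) (a.2.2 ++ y)) (Dw v).
Proof.
elim: u B => [|g u IH] B.
  by rewrite big_cons big_nil addr0 mul1r.
rewrite cat_cons Dw_cons TB_tmul Dw_cons /tmul big_allpairs_dep.
apply: eq_bigr => c _; rewrite IH mulr_sumr; apply: eq_bigr => a _ /=.
rewrite sc_mul -mulrA; congr (_ * (_ * _)); rewrite /TB; apply: eq_bigr => b _.
by rewrite !catA.
Qed.

Lemma TB_ext B B' t : (forall x y, B x y = B' x y) -> TB B t = TB B' t.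
Proof. by move=> h; apply: eq_bigr => p _; rewrite h. Qed.

Lemma cls_conv f g (x : Free R) :
  cls (conv dg f g x) = \sum_(p <- x) sc p.1 * TB (fun u v => cls (f u) * cls (g v)) (Dw p.2).
Proof.
rewrite /conv cls_lin; apply: eq_bigr => p _; congr (_ * _).
rewrite cls_flatten big_map; apply: eq_bigr => a _.
by rewrite cls_scale cls_fmul.
Qed.

Lemma cls_conv3 f g h (x : Free R) :
  cls (conv3 dg f g h x) = \sum_(p <- x) sc p.1 *
    TB (fun u v => TB (fun u' v' => cls (f u') * cls (g v')) (Dw u) * cls (h v)) (Dw p.2).
Proof.
rewrite /conv3 cls_lin; apply: eq_bigr => p _; congr (_ * _).
rewrite cls_flatten big_map; apply: eq_bigr => a _.
rewrite cls_flatten big_map /TB mulr_suml mulr_sumr; apply: eq_bigr => b _.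
by rewrite cls_scale !cls_fmul sc_mul -!mulrA.
Qed.

Lemma sc_sum (s : Free R) (F : R * word -> R) : sc (\sum_(p <- s) F p) = \sum_(p <- s) sc (F p).
Proof. by elim: s => [|p s IH]; rewrite ?big_nil ?sc0 // !big_cons sc_add IH. Qed.

Lemma cls_etaeps (x : Free R) : cls (etaeps x) = \sum_(p <- x) sc p.1 * sc (eps_word R p.2).
Proof. by rewrite /etaeps /eps -[cls _]/(sc _) sc_sum; apply: eq_bigr => p _; rewrite sc_mul. Qed.

Lemma eps_word_cons g u : eps_word R (g :: u) = eps_gen R g * eps_word R u.
Proof. by rewrite /eps_word big_cons. Qed.

Lemma cls_fsub (x y : Free R) : cls (fsub x y) = cls x - cls y.
Proof. by rewrite /fsub cls_cat cls_scale scN sc1 mulN1r. Qed.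

Lemma sc_swap a (X Y : Q) : X * (sc a * Y) = sc a * (X * Y).
Proof. by rewrite mulrA -sc_comm -mulrA. Qed.

Definition central (c : Q) := forall t : Q, c * t = t * c.

Lemma sum_sandwich (T : Type) (s : seq T) (X Z : Q) (F : T -> Q) :
  \sum_(a <- s) X * F a * Z = X * (\sum_(a <- s) F a) * Z.
Proof. by rewrite mulr_sumr mulr_suml. Qed.

Definition Bsi u v : Q := Sw u * wd v.
Definition Bis u v : Q := wd u * Sw v.

Lemma conv_S_id :
  (forall g, TB Bsi (dg g) = sc (eps_gen R g)) ->
  forall x : Free R, in_ideal rels (fsub (conv dg (@S_word R) (@idw R) x) (etaeps x)).
Proof.
move=> hg x; apply: cls0_ideal; apply/eqP; rewrite cls_fsub subr_eq0; apply/eqP.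
rewrite cls_conv cls_etaeps; apply: eq_bigr => p _; congr (_ * _).
elim: p.2 => [|g w IH]; first by rewrite TB_nil /eps_word big_nil sc1 mulr1.
rewrite Dw_cons TB_tmul eps_word_cons sc_mul -IH -hg.
transitivity (\sum_(b <- Dw w) sc b.1 * Sw b.2.1 * TB Bsi (dg g) * wd b.2.2).
  rewrite /TB; under eq_bigr => a _ do rewrite mulr_sumr.
  rewrite exchange_big; apply: eq_bigr => b _; rewrite mulr_sumr mulr_suml.
  apply: eq_bigr => a _; rewrite /Bsi /idw -/(Sw _) -/(wd _) Sw_cat wd_cat.
  rewrite -!mulrA.
  by rewrite (sc_swap a.1 (Sw b.2.1)) (sc_swap a.1 (sc b.1)).
rewrite hg /TB mulr_sumr; apply: eq_bigr => b _.
by rewrite -!mulrA sc_swap (sc_swap _ (sc _)).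
Qed.


Lemma conv_id_S :
  (forall g, TB Bis (dg g) = sc (eps_gen R g)) ->
  forall x : Free R, in_ideal rels (fsub (conv dg (@idw R) (@S_word R) x) (etaeps x)).
Proof.
move=> hg x; apply: cls0_ideal; apply/eqP; rewrite cls_fsub subr_eq0; apply/eqP.
rewrite cls_conv cls_etaeps; apply: eq_bigr => p _; congr (_ * _).
elim: p.2 => [|g w IH]; first by rewrite TB_nil /eps_word big_nil sc1 mulr1.
rewrite Dw_cons TB_tmul eps_word_cons sc_mul -hg.
transitivity (\sum_(a <- dg g) sc a.1 * wd a.2.1 * sc (eps_word R w) * Sw a.2.2).
  apply: eq_bigr => a _; rewrite -IH /TB !mulr_sumr mulr_suml; apply: eq_bigr => b _.
  rewrite /idw -/(Sw _) -/(wd _) Sw_cat wd_cat -!mulrA.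
  by rewrite (sc_swap b.1 (wd a.2.1)).
rewrite /TB mulr_suml; apply: eq_bigr => a _.
by rewrite /Bis -!mulrA (sc_comm _ (Sw a.2.2)).
Qed.

Lemma central_swap (c X Y : Q) : central c -> X * (c * Y) = c * (X * Y).
Proof. by move=> h; rewrite mulrA -h -mulrA. Qed.

Lemma central_mul (c d : Q) : central c -> central d -> central (c * d).
Proof. by move=> hc hd t; rewrite -mulrA hd mulrA hc mulrA. Qed.

Lemma central_sc a : central (sc a). Proof. exact: sc_comm. Qed.

Definition DT u : Q := TB Bis (Dw u).

Lemma DT_sum (t : Tens R) v :
  \sum_(a <- t) sc a.1 * TB (fun x y => Bis (a.2.1 ++ x) (a.2.2 ++ y)) (Dw v) =
  \sum_(a <- t) sc a.1 * wd a.2.1 * DT v * Sw a.2.2.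
Proof.
apply: eq_bigr => a _; rewrite /DT /TB !mulr_sumr mulr_suml; apply: eq_bigr => b _.
rewrite /Bis Sw_cat wd_cat -!mulrA.
by rewrite (sc_swap b.1 (wd a.2.1)).
Qed.

Lemma DT_central (hG : forall g, central (TB Bis (dg g))) u : central (DT u).
Proof.
elim: u => [|g u IH]; first by rewrite /DT TB_nil /Bis Sw_nil wd_nil mulr1 => t; rewrite mul1r mulr1.
have -> : DT (g :: u) = DT u * TB Bis (dg g).
  rewrite /DT Dw_cons TB_tmul DT_sum /TB mulr_sumr; apply: eq_bigr => a _.
  by rewrite -!mulrA (central_swap _ _ IH) (central_swap _ _ IH).
exact: central_mul.
Qed.

Lemma DT_cat (hG : forall g, central (TB Bis (dg g))) u v : DT (u ++ v) = DT v * DT u.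
Proof.
rewrite {1}/DT TB_Dw_cat DT_sum /DT /TB mulr_sumr; apply: eq_bigr => a _.
have hc := DT_central hG v.
by rewrite -!mulrA (central_swap _ _ hc) (central_swap _ _ hc).
Qed.

Lemma vn_P (hG : forall g, central (TB Bis (dg g)))
  (hP : forall g, \sum_(a <- dg g) sc a.1 * DT a.2.1 * wd a.2.2 = wd [:: g]) :
  forall x : Free R, in_ideal rels (fsub (conv3 dg (@idw R) (@S_word R) (@idw R) x) x).
Proof.
move=> x; apply: cls0_ideal; apply/eqP; rewrite cls_fsub subr_eq0; apply/eqP.
rewrite cls_conv3 [RHS]cls_sum; apply: eq_bigr => p _; congr (_ * _).
rewrite -/(DT _).
have -> : forall w, TB (fun u v => DT u * cls (idw R v)) (Dw w) = TB (fun u v => DT u * wd v) (Dw w).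
  by [].
elim: p.2 => [|g w IH].
  by rewrite TB_nil /DT TB_nil /Bis Sw_nil wd_nil !mulr1.
rewrite Dw_cons TB_tmul wd_cons -hP -IH /TB mulr_suml; apply: eq_bigr => a _.
rewrite [LHS]mulr_sumr [RHS]mulr_sumr; apply: eq_bigr => b _.
rewrite DT_cat // wd_cat -!mulrA (sc_swap b.1 (wd a.2.2)) (sc_swap b.1 (DT a.2.1)).
congr (_ * (_ * _)).
have hc := DT_central hG b.2.1.
by rewrite (central_swap _ _ hc) (central_swap _ _ hc).
Qed.

Definition DS u : Q := TB Bsi (Dw u).

Lemma DS_sum (t : Tens R) v :
  \sum_(a <- t) sc a.1 * TB (fun x y => Bsi (a.2.1 ++ x) (a.2.2 ++ y)) (Dw v) =
  \sum_(b <- Dw v) sc b.1 * Sw b.2.1 * TB Bsi t * wd b.2.2.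
Proof.
rewrite /TB; under eq_bigr => a _ do rewrite mulr_sumr.
rewrite exchange_big; apply: eq_bigr => b _; rewrite mulr_sumr mulr_suml.
apply: eq_bigr => a _; rewrite /Bsi Sw_cat wd_cat -!mulrA.
by rewrite (sc_swap a.1 (Sw b.2.1)) (sc_swap a.1 (sc b.1)).
Qed.

Lemma DS_central (hG : forall g, central (TB Bsi (dg g))) u : central (DS u).
Proof.
elim: u => [|g u IH]; first by rewrite /DS TB_nil /Bsi Sw_nil wd_nil mulr1 => t; rewrite mul1r mulr1.
have -> : DS (g :: u) = TB Bsi (dg g) * DS u.
  rewrite /DS Dw_cons TB_tmul DS_sum {3}/TB mulr_sumr; apply: eq_bigr => b _.
  by rewrite -!mulrA (central_swap _ _ (hG g)) (central_swap _ _ (hG g)).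
exact: central_mul.
Qed.

Lemma DS_cat (hG : forall g, central (TB Bsi (dg g))) u v : DS (u ++ v) = DS u * DS v.
Proof.
rewrite {1}/DS TB_Dw_cat DS_sum -/(DS u) /DS {3}/TB mulr_sumr; apply: eq_bigr => b _.
have hc := DS_central hG u.
by rewrite -!mulrA (central_swap _ _ hc) (central_swap _ _ hc).
Qed.

Lemma vn_Q (hG : forall g, central (TB Bsi (dg g)))
  (hQ : forall g, \sum_(a <- dg g) sc a.1 * DS a.2.1 * Sw a.2.2 = Sg rels g) :
  forall x : Free R, in_ideal rels (fsub (conv3 dg (@S_word R) (@idw R) (@S_word R) x) (Smap x)).
Proof.
move=> x; apply: cls0_ideal; apply/eqP; rewrite cls_fsub subr_eq0; apply/eqP.
rewrite cls_conv3 /Smap cls_lin; apply: eq_bigr => p _; congr (_ * _).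
rewrite -/(DS _) -/(Sw _).
have -> : forall w, TB (fun u v => DS u * cls (S_word R v)) (Dw w) = TB (fun u v => DS u * Sw v) (Dw w).
  by [].
elim: p.2 => [|g w IH].
  by rewrite TB_nil /DS TB_nil /Bsi Sw_nil wd_nil !mulr1.
rewrite Dw_cons TB_tmul Sw_cons -hQ -IH /TB [RHS]mulr_suml.
under [RHS]eq_bigr => b _ do rewrite mulr_sumr.
rewrite [RHS]exchange_big; apply: eq_bigr => a _.
rewrite [LHS]mulr_sumr; apply: eq_bigr => b _.
rewrite DS_cat // Sw_cat -!mulrA (sc_swap a.1 (Sw b.2.2)) (sc_swap a.1 (DS b.2.1)) (sc_swap a.1 (sc b.1)).
congr (_ * (_ * _)).
have hc := DS_central hG a.2.1.
by rewrite (central_swap _ _ hc) (central_swap _ _ hc).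
Qed.

End Conv.


Section Alg.
Variable A : pzRingType.
Variables k kb l lb E F c q2 qm : A.

Record common_hyps : Prop := CommonHyps {
  H1 : k * kb * k = k;
  H2 : kb * k * kb = kb;
  H3 : k * kb = kb * k;
  H4 : l * lb * l = l;
  H5 : lb * l * lb = lb;
  H6 : l * lb = lb * l;
  H7 : k * kb + l * lb = 1;
  H8 : E * F - F * E - c * k - c * l + c * kb + c * lb = 0;
  Hc : forall t, c * t = t * c;
  Hq2 : forall t, q2 * t = t * q2;
  Hqm : forall t, qm * t = t * qm;
  Hqq : q2 * qm = 1
}.

Variable h : common_hyps.

Lemma mulA3 (a b d : A) : a * b * d = a * (b * d). Proof. by rewrite mulrA. Qed.

Lemma ek : k * kb * k = k. Proof. exact: H1 h. Qed.
Lemma ke : k * (k * kb) = k. Proof. by rewrite (H3 h) mulrA (H1 h). Qed.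
Lemma ekb : k * kb * kb = kb. Proof. by rewrite (H3 h) (H2 h). Qed.
Lemma kbe : kb * (k * kb) = kb. Proof. by rewrite mulrA (H2 h). Qed.
Lemma fl : l * lb * l = l. Proof. exact: H4 h. Qed.
Lemma lf : l * (l * lb) = l. Proof. by rewrite (H6 h) mulrA (H4 h). Qed.
Lemma flb : l * lb * lb = lb. Proof. by rewrite (H6 h) (H5 h). Qed.
Lemma lbf : lb * (l * lb) = lb. Proof. by rewrite mulrA (H5 h). Qed.

Lemma f_def : l * lb = 1 - k * kb. Proof. by rewrite -(H7 h) [k * kb + _]addrC addrK. Qed.
Lemma ee : k * kb * (k * kb) = k * kb. Proof. by rewrite mulrA (H1 h). Qed.
Lemma ef : k * kb * (l * lb) = 0. Proof. by rewrite f_def mulrBr mulr1 ee subrr. Qed.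
Lemma fe : l * lb * (k * kb) = 0. Proof. by rewrite f_def mulrBl mul1r ee subrr. Qed.

Lemma cross (X Y : A) : X = X * (k * kb) -> Y = (l * lb) * Y -> X * Y = 0.
Proof. by move=> hX hY; rewrite hX hY mulrA -(mulrA X) ef mulr0 mul0r. Qed.
Lemma cross' (X Y : A) : X = (k * kb) * X -> Y = Y * (l * lb) -> Y * X = 0.
Proof. by move=> hX hY; rewrite hX hY -mulrA (mulrA (l * lb)) fe mul0r mulr0. Qed.

Lemma k_r : k = k * (k * kb). Proof. by rewrite ke. Qed.
Lemma kb_r : kb = kb * (k * kb). Proof. by rewrite kbe. Qed.
Lemma k_l : k = (k * kb) * k. Proof. by rewrite ek. Qed.
Lemma kb_l : kb = (k * kb) * kb. Proof. by rewrite ekb. Qed.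
Lemma l_r : l = l * (l * lb). Proof. by rewrite lf. Qed.
Lemma lb_r : lb = lb * (l * lb). Proof. by rewrite lbf. Qed.
Lemma l_l : l = (l * lb) * l. Proof. by rewrite fl. Qed.
Lemma lb_l : lb = (l * lb) * lb. Proof. by rewrite flb. Qed.

Lemma kl : k * l = 0. Proof. exact: cross k_r l_l. Qed.
Lemma klb : k * lb = 0. Proof. exact: cross k_r lb_l. Qed.
Lemma kbl : kb * l = 0. Proof. exact: cross kb_r l_l. Qed.
Lemma kblb : kb * lb = 0. Proof. exact: cross kb_r lb_l. Qed.
Lemma lk : l * k = 0. Proof. exact: cross' k_l l_r. Qed.
Lemma lbk : lb * k = 0. Proof. exact: cross' k_l lb_r. Qed.
Lemma lkb : l * kb = 0. Proof. exact: cross' kb_l l_r. Qed.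
Lemma lbkb : lb * kb = 0. Proof. exact: cross' kb_l lb_r. Qed.

Lemma sum1 : (kb + lb) * (k + l) = 1.
Proof. by rewrite mulrDl !mulrDr kbl lbk addr0 add0r -(H3 h) -(H6 h) (H7 h). Qed.
Lemma sum1' : (k + l) * (kb + lb) = 1.
Proof. by rewrite mulrDl !mulrDr klb lkb addr0 add0r (H7 h). Qed.
Lemma kbk : kb * k = k * kb. Proof. by rewrite (H3 h). Qed.
Lemma lbl : lb * l = l * lb. Proof. by rewrite (H6 h). Qed.

Lemma qq' : qm * q2 = 1. Proof. by rewrite (Hqm h) (Hqq h). Qed.

(* the S-image of the EF relator *)
Lemma S_rel8 (hE : (k + l) * E = q2 * (E * (k + l))) (hF : (k + l) * F = qm * (F * (k + l))) :
  (- (k * F) + - (l * F)) * (- (E * kb) + - (E * lb))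
  - (- (E * kb) + - (E * lb)) * (- (k * F) + - (l * F))
  - c * kb - c * lb + c * k + c * l = 0.
Proof.
have eF : - (k * F) + - (l * F) = - ((k + l) * F) by rewrite mulrDl opprD.
have eE : - (E * kb) + - (E * lb) = - (E * (kb + lb)) by rewrite mulrDr opprD.
rewrite eF eE !mulrNN.
have -> : (k + l) * F * (E * (kb + lb)) = F * E.
  rewrite hF -!mulrA (mulrA (k + l) E) hE -!mulrA sum1' mulr1.
  by rewrite (mulrA F q2) -(Hq2 h F) -mulrA mulrA qq' mul1r.
have -> : E * (kb + lb) * ((k + l) * F) = E * F.
  by rewrite -mulrA (mulrA (kb + lb)) sum1 mul1r.
rewrite -[RHS]oppr0 -(H8 h) !opprD !opprK.
by rewrite (ACl (2*1*5*6*3*4))%AC.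
Qed.


Lemma comm_kbl (X : A) : X \in [:: k; kb; l; lb] -> (kb + lb) * X = X * (kb + lb).
Proof.
rewrite !inE => /or4P[] /eqP ->; rewrite mulrDl mulrDr.
- by rewrite lbk klb kbk.
- by rewrite lbkb kblb.
- by rewrite kbl lkb lbl.
- by rewrite kblb lbkb.
Qed.

Lemma comm_kl (X : A) : X \in [:: k; kb; l; lb] -> (k + l) * X = X * (k + l).
Proof.
rewrite !inE => /or4P[] /eqP ->; rewrite mulrDl mulrDr.
- by rewrite lk kl.
- by rewrite lkb kbl kbk.
- by rewrite kl lk.
- by rewrite klb lbk lbl.
Qed.

Lemma SE_gen (X Y s s' : A) : X \in [:: k; kb; l; lb] ->
  (forall t, s * t = t * s) -> s * s' = 1 -> Y * E = s' * (E * X) ->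
  (- (E * kb) + - (E * lb)) * X - s * (Y * (- (E * kb) + - (E * lb))) = 0.
Proof.
move=> hX hs hss hY.
have eE : - (E * kb) + - (E * lb) = - (E * (kb + lb)) by rewrite mulrDr opprD.
rewrite eE mulNr !mulrN opprK -!mulrA (comm_kbl hX) (mulrA Y E) hY -!mulrA (mulrA s s') hss mul1r.
by rewrite addNr.
Qed.

Lemma SF_gen (X Y s t : A) : Y \in [:: k; kb; l; lb] ->
  (forall u, s * u = u * s) -> s * t = 1 -> Y * F = t * (F * X) ->
  (- (k * F) + - (l * F)) * X - s * (Y * (- (k * F) + - (l * F))) = 0.
Proof.
move=> hY hs hst hW.
have eF : - (k * F) + - (l * F) = - ((k + l) * F) by rewrite mulrDl opprD.
have FX : F * X = s * (Y * F) by rewrite hW mulrA hst mul1r.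
rewrite eF mulNr !mulrN opprK -!mulrA FX (mulrA Y (k + l)) -(comm_kl hY) -mulrA.
by rewrite (mulrA (k + l) s) -(hs (k + l)) -mulrA addNr.
Qed.

End Alg.


Section Inst.
Variable R : fieldType.
Variable rels : seq (Free R).
Local Notation Q := (Q rels).
Local Notation cls := (@cls R rels).
Local Notation sc := (@sc R rels).
Local Notation wd := (@wd R rels).

Lemma wd_cons2 g h u : wd (g :: h :: u) = wd [:: g] * wd (h :: u).
Proof. by rewrite wd_cons. Qed.

Lemma cls_rel_eq r : r \in rels -> \sum_(p <- r) sc p.1 * wd p.2 = 0.
Proof. by move=> h; rewrite -cls_sum; apply: cls_rel. Qed.

End Inst.

Section SgVals.
Variable R : fieldType.
Variable rels : seq (Free R).
Local Notation wd := (@wd R rels).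
Local Notation k := (wd [:: GK]).
Local Notation kb := (wd [:: GKb]).
Local Notation l := (wd [:: GL]).
Local Notation lb := (wd [:: GLb]).
Local Notation E := (wd [:: GE]).
Local Notation F := (wd [:: GF]).
Lemma SgK : Sg rels GK = kb. Proof. by []. Qed.
Lemma SgKb : Sg rels GKb = k. Proof. by []. Qed.
Lemma SgL : Sg rels GL = lb. Proof. by []. Qed.
Lemma SgLb : Sg rels GLb = l. Proof. by []. Qed.
Lemma SgE : Sg rels GE = - (E * kb) + - (E * lb).
Proof. by rewrite /Sg cls_sum !big_cons big_nil /= !wd_cons2 scN sc1 !mulN1r addr0. Qed.
Lemma SgF : Sg rels GF = - (k * F) + - (l * F).
Proof. by rewrite /Sg cls_sum !big_cons big_nil /= !wd_cons2 scN sc1 !mulN1r addr0. Qed.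

End SgVals.

Ltac simp_SX := rewrite /SX !big_cons big_nil /= !Sw_cons Sw_nil !mul1r
  ?SgK ?SgKb ?SgL ?SgLb ?SgE ?SgF !(sc1, scN, mul1r, mulN1r, mulNr, addr0).


Section Common.
Variable R : fieldType.
Variable q : R.
Variable rels : seq (Free R).
Variable hsub : forall r, r \in rels_common q -> r \in rels.
Variable hq0 : q != 0.
Local Notation Q := (Q rels).
Local Notation sc := (@sc R rels).
Local Notation wd := (@wd R rels).
Local Notation k := (wd [:: GK]).
Local Notation kb := (wd [:: GKb]).
Local Notation l := (wd [:: GL]).
Local Notation lb := (wd [:: GLb]).
Local Notation E := (wd [:: GE]).
Local Notation F := (wd [:: GF]).
Local Notation c := (sc ((q - q^-1)^-1)).
Local Notation q2 := (sc (q ^+ 2)).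
Local Notation qm := (sc (q ^- 2)).

Ltac get_crel r :=
  (have : \sum_(p <- (r : Free R)) sc p.1 * wd p.2 = 0 by
    (apply: cls_rel_eq; apply: hsub; rewrite /rels_common /= !inE eqxx ?orTb ?orbT));
  rewrite !big_cons big_nil /= !wd_cons2 !(sc1, scN, mul1r, mulN1r, mulNr, addr0).

Lemma sub0 (a b : Q) : a - b = 0 -> a = b.
Proof. by move/eqP; rewrite subr_eq0 => /eqP. Qed.

Lemma com_hyps : common_hyps k kb l lb E F c q2 qm.
Proof.
split.
- by get_crel ([:: (1, [:: GK; GKb; GK]); (-1, [:: GK])] : Free R); rewrite mulrA => /sub0.
- by get_crel ([:: (1, [:: GKb; GK; GKb]); (-1, [:: GKb])] : Free R); rewrite mulrA => /sub0.
- by get_crel ([:: (1, [:: GK; GKb]); (-1, [:: GKb; GK])] : Free R) => /sub0.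
- by get_crel ([:: (1, [:: GL; GLb; GL]); (-1, [:: GL])] : Free R); rewrite mulrA => /sub0.
- by get_crel ([:: (1, [:: GLb; GL; GLb]); (-1, [:: GLb])] : Free R); rewrite mulrA => /sub0.
- by get_crel ([:: (1, [:: GL; GLb]); (-1, [:: GLb; GL])] : Free R) => /sub0.
- by get_crel ([:: (1, [:: GK; GKb]); (1, [:: GL; GLb]); (-1, [::])] : Free R); rewrite wd_nil addrA => /sub0.
- get_crel ([:: (1, [:: GE; GF]); (-1, [:: GF; GE]); (- (q - q^-1)^-1, [:: GK]); (- (q - q^-1)^-1, [:: GL]);
          ((q - q^-1)^-1, [:: GKb]); ((q - q^-1)^-1, [:: GLb])] : Free R).
  by rewrite !addrA.
- exact: sc_comm.
- exact: sc_comm.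
- exact: sc_comm.
- by rewrite -sc_mul mulfV ?sc1 // expf_neq0.
Qed.


Lemma in_cons_ind (P : Free R -> Prop) (a : Free R) (s : seq (Free R)) :
  P a -> (forall r, r \in s -> P r) -> forall r, r \in a :: s -> P r.
Proof. by move=> ha hs r; rewrite inE => /orP[/eqP -> //|]; apply: hs. Qed.

Lemma common_S (hE : (k + l) * E = q2 * (E * (k + l))) (hF : (k + l) * F = qm * (F * (k + l))) :
  forall r, r \in rels_common q -> SX rels r = 0.
Proof.
have h := com_hyps.
rewrite /rels_common /=.
move=> r; rewrite !inE; repeat (case/orP; [move/eqP->|]); last move/eqP->.
- by simp_SX; rewrite (H2 h) subrr.
- by simp_SX; rewrite (H1 h) subrr.
- by simp_SX; rewrite (H3 h) subrr.
- by simp_SX; rewrite (H5 h) subrr.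
- by simp_SX; rewrite (H4 h) subrr.
- by simp_SX; rewrite (H6 h) subrr.
- by simp_SX; rewrite addrA (H7 h) subrr.
- simp_SX; rewrite !addrA; exact: (S_rel8 h hE hF).
Qed.

End Common.

Ltac simp_TB := rewrite /TB /Bsi /Bis !big_cons big_nil /= ?Sw_cons ?Sw_nil ?wd_nil
  ?SgK ?SgKb ?SgL ?SgLb ?SgE ?SgF !(sc1, sc0, mul1r, mulr1, addr0).

Section Twist.
Variable R : fieldType.
Variable q : R.
Variable hq0 : q != 0.
Local Notation rels := (rels_twist q).
Local Notation Q := (Q rels).
Local Notation sc := (@sc R rels).
Local Notation wd := (@wd R rels).
Local Notation k := (wd [:: GK]).
Local Notation kb := (wd [:: GKb]).
Local Notation l := (wd [:: GL]).
Local Notation lb := (wd [:: GLb]).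
Local Notation E := (wd [:: GE]).
Local Notation F := (wd [:: GF]).
Local Notation c := (sc ((q - q^-1)^-1)).
Local Notation q2 := (sc (q ^+ 2)).
Local Notation qm := (sc (q ^- 2)).

Lemma tw_sub r : r \in rels_common q -> r \in rels.
Proof. by move=> h; rewrite /rels_twist mem_cat h. Qed.

Ltac get_rel r :=
  (have : \sum_(p <- (r : Free R)) sc p.1 * wd p.2 = 0 by
    (apply: cls_rel_eq; rewrite /rels_twist /rels_common /= !inE eqxx ?orTb ?orbT));
  rewrite /rel2 !big_cons big_nil /= !wd_cons2 !(sc1, scN, mul1r, mulN1r, mulNr, addr0) => /sub0.

Lemma twT1 : k * E = q2 * (E * l). Proof. by get_rel (rel2 GK GE (q ^+ 2) GE GL). Qed.
Lemma twT2 : l * E = q2 * (E * k). Proof. by get_rel (rel2 GL GE (q ^+ 2) GE GK). Qed.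
Lemma twT3 : kb * E = qm * (E * lb). Proof. by get_rel (rel2 GKb GE (q ^- 2) GE GLb). Qed.
Lemma twT4 : lb * E = qm * (E * kb). Proof. by get_rel (rel2 GLb GE (q ^- 2) GE GKb). Qed.
Lemma twT5 : k * F = qm * (F * l). Proof. by get_rel (rel2 GK GF (q ^- 2) GF GL). Qed.
Lemma twT6 : l * F = qm * (F * k). Proof. by get_rel (rel2 GL GF (q ^- 2) GF GK). Qed.
Lemma twT7 : kb * F = q2 * (F * lb). Proof. by get_rel (rel2 GKb GF (q ^+ 2) GF GLb). Qed.
Lemma twT8 : lb * F = q2 * (F * kb). Proof. by get_rel (rel2 GLb GF (q ^+ 2) GF GKb). Qed.


Lemma tw_hyps : common_hyps k kb l lb E F c q2 qm.
Proof. exact: com_hyps tw_sub hq0. Qed.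

Lemma tw_hE : (k + l) * E = q2 * (E * (k + l)).
Proof. by rewrite mulrDl twT1 twT2 -mulrDr -mulrDr addrC. Qed.
Lemma tw_hF : (k + l) * F = qm * (F * (k + l)).
Proof. by rewrite mulrDl twT5 twT6 -mulrDr -mulrDr addrC. Qed.

Lemma inKL (X : Q) : X = k \/ X = kb \/ X = l \/ X = lb -> X \in [:: k; kb; l; lb].
Proof. by case=> [->|[->|[->|->]]]; rewrite !inE eqxx ?orbT. Qed.

Lemma tw_S r : r \in rels -> SX rels r = 0.
Proof.
have h := tw_hyps.
have hq : (forall t : Q, q2 * t = t * q2) /\ (forall t : Q, qm * t = t * qm) by split; apply: sc_comm.
case: hq => hq2 hqm.
have qq : q2 * qm = 1 := Hqq h.
have qq' : qm * q2 = 1 := qq' h.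
rewrite /rels_twist mem_cat => /orP[/(common_S tw_sub hq0 tw_hE tw_hF) //|].
have m : forall X : Q, X \in [:: k; kb; l; lb] -> X \in [:: k; kb; l; lb] by [].
rewrite !inE; repeat (case/orP; [move/eqP->|]); last move/eqP->; rewrite /rel2; simp_SX.
- by apply: (SE_gen h _ hq2 qq twT4); rewrite !inE eqxx ?orbT.
- by apply: (SE_gen h _ hq2 qq twT3); rewrite !inE eqxx ?orbT.
- by apply: (SE_gen h _ hqm qq' twT2); rewrite !inE eqxx ?orbT.
- by apply: (SE_gen h _ hqm qq' twT1); rewrite !inE eqxx ?orbT.
- by apply: (SF_gen h _ hqm qq' twT8); rewrite !inE eqxx ?orbT.
- by apply: (SF_gen h _ hqm qq' twT7); rewrite !inE eqxx ?orbT.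
- by apply: (SF_gen h _ hq2 qq twT6); rewrite !inE eqxx ?orbT.
- by apply: (SF_gen h _ hq2 qq twT5); rewrite !inE eqxx ?orbT.
Qed.


Lemma tw_Bsi g : TB (@Bsi R rels) (delta_twist_gen R g) = sc (eps_gen R g).
Proof.
have h := tw_hyps.
case: g; simp_TB.
- by rewrite (kbk h) (lbl h) (H7 h).
- by rewrite (H7 h).
- by rewrite (lbk h) (kbl h) addr0.
- by rewrite (lkb h) (klb h) addr0.
- by rewrite -mulrDr -opprD -mulrDr mulNr -mulrA (sum1 h) mulr1 subrr.
- by rewrite -opprD addNr.
Qed.

Lemma tw_Bis g : TB (@Bis R rels) (delta_twist_gen R g) = sc (eps_gen R g).
Proof.
have h := tw_hyps.
case: g; simp_TB.
- by rewrite (H7 h).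
- by rewrite (kbk h) (lbl h) (H7 h).
- by rewrite (lkb h) (klb h) addr0.
- by rewrite (lbk h) (kbl h) addr0.
- by rewrite -opprD addNr.
- by rewrite -mulrDl -opprD -mulrDl mulrN mulrA (sum1 h) mul1r subrr.
Qed.

Theorem twist_main :
  (forall x : Free R, in_ideal rels x -> in_ideal rels (Smap x)) /\
  (forall x : Free R, in_ideal rels
      (fsub (conv (@delta_twist_gen R) (@S_word R) (@idw R) x) (etaeps x))) /\
  (forall x : Free R, in_ideal rels
      (fsub (conv (@delta_twist_gen R) (@idw R) (@S_word R) x) (etaeps x))).
Proof.
split; first by move=> x; apply: Smap_ideal; apply: tw_S.
split; first exact: conv_S_id tw_Bsi.
exact: conv_id_S tw_Bis.
Qed.

End Twist.

Section Norm.
Variable R : fieldType.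
Variable q : R.
Variable hq0 : q != 0.
Local Notation rels := (rels_norm q).
Local Notation Q := (Q rels).
Local Notation sc := (@sc R rels).
Local Notation wd := (@wd R rels).
Local Notation k := (wd [:: GK]).
Local Notation kb := (wd [:: GKb]).
Local Notation l := (wd [:: GL]).
Local Notation lb := (wd [:: GLb]).
Local Notation E := (wd [:: GE]).
Local Notation F := (wd [:: GF]).
Local Notation c := (sc ((q - q^-1)^-1)).
Local Notation q2 := (sc (q ^+ 2)).
Local Notation qm := (sc (q ^- 2)).

Lemma nm_sub r : r \in rels_common q -> r \in rels.
Proof. by move=> h; rewrite /rels_norm mem_cat h. Qed.

Ltac get_rel r :=
  (have : \sum_(p <- (r : Free R)) sc p.1 * wd p.2 = 0 by
    (apply: cls_rel_eq; rewrite /rels_norm /rels_common /= !inE eqxx ?orTb ?orbT));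
  rewrite /rel2 !big_cons big_nil /= !wd_cons2 !(sc1, scN, mul1r, mulN1r, mulNr, addr0) => /sub0.

Lemma nmT1 : k * E = q2 * (E * k). Proof. by get_rel (rel2 GK GE (q ^+ 2) GE GK). Qed.
Lemma nmT2 : l * E = q2 * (E * l). Proof. by get_rel (rel2 GL GE (q ^+ 2) GE GL). Qed.
Lemma nmT3 : kb * E = qm * (E * kb). Proof. by get_rel (rel2 GKb GE (q ^- 2) GE GKb). Qed.
Lemma nmT4 : lb * E = qm * (E * lb). Proof. by get_rel (rel2 GLb GE (q ^- 2) GE GLb). Qed.
Lemma nmT5 : k * F = qm * (F * k). Proof. by get_rel (rel2 GK GF (q ^- 2) GF GK). Qed.
Lemma nmT6 : l * F = qm * (F * l). Proof. by get_rel (rel2 GL GF (q ^- 2) GF GL). Qed.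
Lemma nmT7 : kb * F = q2 * (F * kb). Proof. by get_rel (rel2 GKb GF (q ^+ 2) GF GKb). Qed.
Lemma nmT8 : lb * F = q2 * (F * lb). Proof. by get_rel (rel2 GLb GF (q ^+ 2) GF GLb). Qed.

Lemma nm_hyps : common_hyps k kb l lb E F c q2 qm.
Proof. exact: com_hyps nm_sub hq0. Qed.

Lemma nm_hE : (k + l) * E = q2 * (E * (k + l)).
Proof. by rewrite mulrDl nmT1 nmT2 -mulrDr -mulrDr. Qed.
Lemma nm_hF : (k + l) * F = qm * (F * (k + l)).
Proof. by rewrite mulrDl nmT5 nmT6 -mulrDr -mulrDr. Qed.

Lemma nm_S r : r \in rels -> SX rels r = 0.
Proof.
have h := nm_hyps.
have hq : (forall t : Q, q2 * t = t * q2) /\ (forall t : Q, qm * t = t * qm) by split; apply: sc_comm.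
case: hq => hq2 hqm.
have qq : q2 * qm = 1 := Hqq h.
have qq' : qm * q2 = 1 := qq' h.
rewrite /rels_norm mem_cat => /orP[/(common_S nm_sub hq0 nm_hE nm_hF) //|].
rewrite !inE; repeat (case/orP; [move/eqP->|]); last move/eqP->; rewrite /rel2; simp_SX.
- by apply: (SE_gen h _ hq2 qq nmT3); rewrite !inE eqxx ?orbT.
- by apply: (SE_gen h _ hq2 qq nmT4); rewrite !inE eqxx ?orbT.
- by apply: (SE_gen h _ hqm qq' nmT1); rewrite !inE eqxx ?orbT.
- by apply: (SE_gen h _ hqm qq' nmT2); rewrite !inE eqxx ?orbT.
- by apply: (SF_gen h _ hqm qq' nmT7); rewrite !inE eqxx ?orbT.
- by apply: (SF_gen h _ hqm qq' nmT8); rewrite !inE eqxx ?orbT.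
- by apply: (SF_gen h _ hq2 qq nmT5); rewrite !inE eqxx ?orbT.
- by apply: (SF_gen h _ hq2 qq nmT6); rewrite !inE eqxx ?orbT.
Qed.


Lemma central_gens (cc : Q) : (forall g, cc * wd [:: g] = wd [:: g] * cc) -> central cc.
Proof.
move=> hg; elim/Qind => x; rewrite cls_sum mulr_sumr mulr_suml; apply: eq_bigr => p _.
rewrite mulrA -(sc_comm _ cc) -!mulrA; congr (_ * _).
elim: p.2 => [|g u IH]; first by rewrite wd_nil mul1r mulr1.
by rewrite wd_cons mulrA hg -mulrA IH mulrA.
Qed.

Lemma central1 : central (1 : Q). Proof. by move=> t; rewrite mul1r mulr1. Qed.
Lemma central0 : central (0 : Q). Proof. by move=> t; rewrite mul0r mulr0. Qed.
Lemma centralB (a b : Q) : central a -> central b -> central (a - b).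
Proof. by move=> ha hb t; rewrite mulrBl mulrBr ha hb. Qed.

Lemma e_central : central (k * kb).
Proof.
have h := nm_hyps.
have hq : (forall t : Q, q2 * t = t * q2) /\ (forall t : Q, qm * t = t * qm) by split; apply: sc_comm.
case: hq => hq2 hqm.
have qq : q2 * qm = 1 := Hqq h.
have qq' : qm * q2 = 1 := qq' h.
apply: central_gens; case.
- by rewrite (ek h) (ke h).
- by rewrite (ekb h) (kbe h).
- by rewrite -mulrA (kbl h) mulr0 mulrA (lk h) mul0r.
- by rewrite -mulrA (kblb h) mulr0 mulrA (lbk h) mul0r.
- rewrite -mulrA nmT3 (mulrA k qm) -hqm -mulrA (mulrA k E) nmT1 -!mulrA (mulrA qm q2) qq' mul1r.
  by rewrite !mulrA.
- rewrite -mulrA nmT7 (mulrA k q2) -hq2 -mulrA (mulrA k F) nmT5 -!mulrA (mulrA q2 qm) qq mul1r.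
  by rewrite !mulrA.
Qed.

Lemma f_central : central (l * lb).
Proof. by rewrite (f_def nm_hyps); apply: centralB; [apply: central1 | apply: e_central]. Qed.

Local Notation dgN := (@delta_norm_gen R).

Lemma DT1 g : DT rels dgN [:: g] = TB (Bis rels) (dgN g).
Proof.
rewrite /DT Dw_cons TB_tmul /TB; apply: eq_bigr => a _.
by rewrite big_cons big_nil addr0 mul1r !cats0.
Qed.
Lemma DS1 g : DS rels dgN [:: g] = TB (Bsi rels) (dgN g).
Proof.
rewrite /DS Dw_cons TB_tmul /TB; apply: eq_bigr => a _.
by rewrite big_cons big_nil addr0 mul1r !cats0.
Qed.
Lemma DT0 : DT rels dgN [::] = 1.
Proof. by rewrite /DT TB_nil /Bis Sw_nil wd_nil mulr1. Qed.
Lemma DS0 : DS rels dgN [::] = 1.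
Proof. by rewrite /DS TB_nil /Bsi Sw_nil wd_nil mulr1. Qed.

Lemma nm_Bis_K : TB (Bis rels) (dgN GK) = k * kb. Proof. by simp_TB. Qed.
Lemma nm_Bis_Kb : TB (Bis rels) (dgN GKb) = k * kb. Proof. by simp_TB; rewrite (kbk nm_hyps). Qed.
Lemma nm_Bis_L : TB (Bis rels) (dgN GL) = l * lb.
Proof. by simp_TB; rewrite (lkb nm_hyps) (klb nm_hyps) !addr0. Qed.
Lemma nm_Bis_Lb : TB (Bis rels) (dgN GLb) = l * lb.
Proof. by simp_TB; rewrite (lbk nm_hyps) (kbl nm_hyps) !addr0 (lbl nm_hyps). Qed.
Lemma nm_Bis_E : TB (Bis rels) (dgN GE) = 0.
Proof. by simp_TB; rewrite -opprD addNr. Qed.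
Lemma nm_Bis_F : TB (Bis rels) (dgN GF) = 0.
Proof. by simp_TB; rewrite -mulrDl -opprD -mulrDl mulrN mulrA (sum1 nm_hyps) mul1r subrr. Qed.

Lemma nm_Bsi_K : TB (Bsi rels) (dgN GK) = k * kb. Proof. by simp_TB; rewrite (kbk nm_hyps). Qed.
Lemma nm_Bsi_Kb : TB (Bsi rels) (dgN GKb) = k * kb. Proof. by simp_TB. Qed.
Lemma nm_Bsi_L : TB (Bsi rels) (dgN GL) = l * lb.
Proof. by simp_TB; rewrite (lbk nm_hyps) (kbl nm_hyps) !addr0 (lbl nm_hyps). Qed.
Lemma nm_Bsi_Lb : TB (Bsi rels) (dgN GLb) = l * lb.
Proof. by simp_TB; rewrite (lkb nm_hyps) (klb nm_hyps) !addr0. Qed.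
Lemma nm_Bsi_E : TB (Bsi rels) (dgN GE) = 0.
Proof. by simp_TB; rewrite -mulrDr -opprD -mulrDr mulNr -mulrA (sum1 nm_hyps) mulr1 subrr. Qed.
Lemma nm_Bsi_F : TB (Bsi rels) (dgN GF) = 0.
Proof. by simp_TB; rewrite -opprD addNr. Qed.

Ltac simp_D := rewrite !big_cons big_nil /= ?DT1 ?DS1 ?DT0 ?DS0 ?Sw_cons ?Sw_nil ?wd_nil
  ?nm_Bis_K ?nm_Bis_Kb ?nm_Bis_L ?nm_Bis_Lb ?nm_Bis_E ?nm_Bis_F
  ?nm_Bsi_K ?nm_Bsi_Kb ?nm_Bsi_L ?nm_Bsi_Lb ?nm_Bsi_E ?nm_Bsi_F
  ?SgK ?SgKb ?SgL ?SgLb ?SgE ?SgF !(sc1, mul1r, mulr1, mul0r, addr0, add0r).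

Theorem norm_main :
  (forall x : Free R, in_ideal rels x -> in_ideal rels (Smap x)) /\
  (forall x : Free R, in_ideal rels
      (fsub (conv3 (@delta_norm_gen R) (@idw R) (@S_word R) (@idw R) x) x)) /\
  (forall x : Free R, in_ideal rels
      (fsub (conv3 (@delta_norm_gen R) (@S_word R) (@idw R) (@S_word R) x) (Smap x))).
Proof.
have h := nm_hyps.
split; first by move=> x; apply: Smap_ideal; apply: nm_S.
split.
  apply: vn_P.
    case; rewrite ?nm_Bis_K ?nm_Bis_Kb ?nm_Bis_L ?nm_Bis_Lb ?nm_Bis_E ?nm_Bis_F;
      by [apply: e_central | apply: f_central | apply: central0].
  case; simp_D.
  - exact: (ek h).
  - exact: (ekb h).
  - by rewrite -!mulrA (lbk h) (kbl h) !mulr0 !addr0 mulrA (fl h).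
  - by rewrite -!mulrA (lbkb h) (kblb h) !mulr0 !addr0 mulrA (flb h).
  - by [].
  - by rewrite -mulrDl (H7 h) mul1r.
apply: vn_Q.
  case; rewrite ?nm_Bsi_K ?nm_Bsi_Kb ?nm_Bsi_L ?nm_Bsi_Lb ?nm_Bsi_E ?nm_Bsi_F;
    by [apply: e_central | apply: f_central | apply: central0].
case; simp_D.
- exact: (ekb h).
- exact: (ek h).
- by rewrite -!mulrA (lbkb h) (kblb h) !mulr0 !addr0 mulrA (flb h).
- by rewrite -!mulrA (lbk h) (kbl h) !mulr0 !addr0 mulrA (fl h).
- by [].
- by rewrite -mulrDl (H7 h) mul1r.
Qed.

End Norm.


Theorem mainTheorem11 (R : fieldType) (q : R)
    (hq0 : q != 0) (hq1 : q != 1) (hqm1 : q != -1) :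
  (* (1) U_{K,L,twist}: S is a well-defined antihomomorphism and an antipode *)
  ((forall x : Free R, in_ideal (rels_twist q) x ->
                       in_ideal (rels_twist q) (Smap x)) /\
   (forall x : Free R, in_ideal (rels_twist q)
      (fsub (conv (@delta_twist_gen R) (@S_word R) (@idw R) x) (etaeps x))) /\
   (forall x : Free R, in_ideal (rels_twist q)
      (fsub (conv (@delta_twist_gen R) (@idw R) (@S_word R) x) (etaeps x))))
  /\
  (* (2) U_{K,L,norm}: T is a well-defined antihomomorphism, id*T*id = id,
     T*id*T = T *)
  ((forall x : Free R, in_ideal (rels_norm q) x ->
                       in_ideal (rels_norm q) (Smap x)) /\
   (forall x : Free R, in_ideal (rels_norm q)
      (fsub (conv3 (@delta_norm_gen R) (@idw R) (@S_word R) (@idw R) x) x)) /\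
   (forall x : Free R, in_ideal (rels_norm q)
      (fsub (conv3 (@delta_norm_gen R) (@S_word R) (@idw R) (@S_word R) x)
            (Smap x)))).
Proof.
split; [exact: (twist_main hq0) | exact: (norm_main hq0)].
Qed.
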